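(* Let $\Omega\subset\mathbb{C}$ be a bounded domain whose boundary consists of $n$ disjoint Jordan curves, let $V_0,\dots,V_{n-1}$ be the connected components of $\hat{\mathbb{C}}\setminus\Omega$ with $\infty\in V_0$, let $\Omega_i=\hat{\mathbb{C}}\setminus V_i$, and let $\phi_i:\overline{D}\to\overline{\Omega_i}$ be Riemann mappings ($i=0,\dots,n-1$). For every $k\in\mathbb{N}$ and $i\in\{0,\dots,n-1\}$, the set $$E^{(i)}_k=\{f\in A(\Omega):\operatorname{Re}(f\circ\phi_i)\restriction_{\mathbb{T}}\in D_k\}$$ is an open subset of $A(\Omega)$.
   Context: $D$ is the open unit disc, $\mathbb{T}=\partial D$. A Riemann mapping $\phi_i:\overline{D}\to\overline{\Omega_i}$ (closure in $\hat{\mathbb{C}}$) is a homeomorphism mapping $D$ conformally onto $\Omega_i$; note $\phi_i(\mathbb{T})=\partial V_i\subset\partial\Omega$. $A(\Omega)$ is the space of functions continuous on $\overline{\Omega}$ and holomorphic on $\Omega$, with the supremum norm on $\overline{\Omega}$. Functions on $\mathbb{T}$ are identified with $2\pi$-periodic functions on $\mathbb{R}$ via $y\mapsto e^{iy}$. For $k\in\mathbb{N}$, $D_k$ is the set of real continuous functions $u$ on $\mathbb{T}$ such that for every $\theta\in\mathbb{R}$ there exists $y\in(\theta,\theta+\frac1k)$ with $|u(y)-u(\theta)|>k|y-\theta|$. *)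

(* Defs.v *)
(* C is modelled by R[i] (real_closed's
   complex numbers) over an arbitrary realType R, with its modulus topology;
   the Riemann sphere is MathComp-Analysis' one-point compactification of C. *)
From HB Require Import structures.
From mathcomp Require Import all_boot all_order all_algebra.
From mathcomp Require Import all_classical all_reals all_analysis.
From mathcomp Require Import complex.
Import Order.TTheory GRing.Theory Num.Theory.
Import numFieldNormedType.Exports.
Export numFieldNormedType.Exports.
Set Implicit Arguments. Unset Strict Implicit. Unset Printing Implicit Defensive.
Local Open Scope classical_set_scope.
Local Open Scope ring_scope.

Definition CC (R : realType) : numClosedFieldType := R[i].

(* The Riemann sphere  \hat C = C ∪ {∞}, with None = ∞. *)
Definition Chat (R : realType) : topologicalType :=
  one_point_compactification (CC R).

Section Defs.
Variable R : realType.
Local Notation C := (CC R).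
Local Notation Ch := (Chat R).

Definition modulus (z : C) : R := ComplexField.Normc.normc (z : R[i]).

Definition unit_circle : set C := [set z | modulus z = 1].
Definition open_disc : set C := [set z | modulus z < 1].
Definition closed_disc : set C := [set z | modulus z <= 1].

Definition expi (y : R) : C := (cos y +i* sin y)%C.

Definition toChat (z : C) : Ch := Some z.

Definition boundary (A : set C) : set C := closure A `\` interior A.

Definition bounded_C (A : set C) : Prop :=
  exists M : R, forall z, A z -> modulus z <= M.

Definition domain (A : set C) : Prop := open A /\ connected A /\ A !=set0.

(* a Jordan curve: homeomorphic image of the unit circle
   (continuous injective image of a compact set in a Hausdorff space) *)
Definition jordan_curve (J : set C) : Prop :=
  exists g : C -> C,
    {within unit_circle, continuous g} /\
    (forall z w, unit_circle z -> unit_circle w -> g z = g w -> z = w) /\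
    g @` unit_circle = J.

Definition sphere_holomorphic_at (phi : C -> Ch) (z : C) : Prop :=
  match phi z with
  | Some _ => derivable (fun w => odflt 0 (phi w)) z 1
  | None => derivable (fun w => if phi w is Some a then a^-1 else 0) z 1
  end.

(* phi : \bar D -> \bar U (closure in \hat C) is a homeomorphism mapping D
   conformally (i.e. injectively and holomorphically) onto U. *)
Definition riemann_mapping (phi : C -> Ch) (U : set Ch) : Prop :=
  [/\ {within closed_disc, continuous phi},
      (forall z w, closed_disc z -> closed_disc w -> phi z = phi w -> z = w),
      phi @` closed_disc = closure U &
      (exists psi : Ch -> C,
          {within closure U, continuous psi} /\
          forall z, closed_disc z -> psi (phi z) = z)] /\
  (phi @` open_disc = U /\
   forall z, open_disc z -> sphere_holomorphic_at phi z).

Definition disc_algebra (Omega : set C) (f : C -> C) : Prop :=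
  {within closure Omega, continuous f} /\
  forall z, Omega z -> derivable f z 1.

Definition supdist (Omega : set C) (f g : C -> C) : R :=
  sup [set modulus (f z - g z) | z in closure Omega].

Definition open_in_A (Omega : set C) (E : set (C -> C)) : Prop :=
  forall f, E f -> exists2 eps : R, 0 < eps &
    forall g, disc_algebra Omega g -> supdist Omega f g < eps -> E g.

(* D_k, for functions on T identified with 2pi-periodic functions on R *)
Definition Dk (k : nat) : set (R -> R) :=
  [set u | [/\ continuous u,
              (forall y, u (y + 2 * pi) = u y) &
              forall theta, exists y,
                theta < y < theta + k%:R^-1 /\
                `|u y - u theta| > k%:R * `|y - theta| ] ].

Definition Ek (Omega : set C) (phi : nat -> C -> Ch) (k i : nat) : set (C -> C) :=
  [set f | disc_algebra Omega f /\
           Dk k (fun y => complex.Re (f (odflt 0 (phi i (expi y)) : R[i])))].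

End Defs.

(* Main.v *)
Require Import Defs.
From HB Require Import structures.
From mathcomp Require Import all_boot all_order all_algebra.
From mathcomp Require Import all_classical all_reals all_analysis.
From mathcomp Require Import complex.
From mathcomp Require Import lra.
Import Order.TTheory GRing.Theory Num.Theory.
Import numFieldNormedType.Exports.
Local Open Scope classical_set_scope.
Local Open Scope ring_scope.
Section S.
Variable R : realType.
Local Notation C := (CC R).
Lemma normE (z : C) : `|z| = ((modulus z)%:C)%C.
Proof. reflexivity. Qed.
Lemma modulus_ge0 (z : C) : 0 <= modulus z.
Proof. by case: z => a b; exact: sqrtr_ge0. Qed.
Lemma modulusN (z : C) : modulus (- z) = modulus z.
Proof. have := normrN z. rewrite !normE. move=> [h]. exact h. Qed.
Lemma modulusD (z w : C) : modulus (z + w) <= modulus z + modulus w.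
Proof. by rewrite -lecR rmorphD /= -!normE ler_normD. Qed.
Lemma modulusB (z w : C) : modulus (z - w) = modulus (w - z).
Proof. by rewrite -modulusN opprB. Qed.
Lemma nbhsC (z : C) (A : set C) : nbhs z A <->
  exists2 r : R, 0 < r & forall w, modulus (z - w) < r -> A w.
Proof.
rewrite nbhs_ballP; split.
  case=> e /= e0 H; exists (complex.Re e).
    by case: e e0 {H} => a b; rewrite ltcE /= => /andP[].
  move=> w hw; apply: H; rewrite -ball_normE /= normE.
  move: e0 hw; case: e => a b; rewrite ltcE /= => /andP[/eqP b0 _] h.
  rewrite b0. rewrite ltcR. exact h.
case=> r r0 H; exists (r%:C)%C => /=; first by rewrite ltcR.
by move=> w; rewrite -ball_normE /= normE ltcR; apply: H.
Qed.

Lemma within_near {T U : topologicalType} (A : set T) (f : T -> U) x B :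
  {within A, continuous f} -> A x -> nbhs (f x) B ->
  \forall y \near x, A y -> B (f y).
Proof. by move=> /subspace_continuousP h Ax Bn; exact: (h x Ax B Bn). Qed.

Lemma nbhsR (x : R) (A : set R) :
  (exists2 r : R, 0 < r & forall y, `|x - y| < r -> A y) -> nbhs x A.
Proof. by case=> r r0 H; apply/nbhs_ballP; exists r => // y; rewrite -ball_normE /=; apply: H. Qed.


Lemma modulus_ReIm (z : C) : modulus z <= `|complex.Re z| + `|complex.Im z|.
Proof.
case: z => a b.
rewrite /modulus /ComplexField.Normc.normc /=.
have h0 : 0 <= `|a| + `|b| by rewrite addr_ge0.
rewrite -[X in _ <= X]ger0_norm // -sqrtr_sqr ler_wsqrtr //.
have ha : a^+2 = `|a|^+2 by rewrite real_normK ?num_real.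
have hb : b^+2 = `|b|^+2 by rewrite real_normK ?num_real.
rewrite ha hb sqrrD.
have : 0 <= `|a| * `|b| by rewrite mulr_ge0.
lra.
Qed.

Lemma Re_le (z : C) : `|complex.Re z| <= modulus z.
Proof.
case: z => a b; rewrite /modulus /ComplexField.Normc.normc /=.
rewrite -sqrtr_sqr ler_wsqrtr //.
have := sqr_ge0 b; lra.
Qed.

Lemma Im_le (z : C) : `|complex.Im z| <= modulus z.
Proof.
case: z => a b; rewrite /modulus /ComplexField.Normc.normc /=.
rewrite -sqrtr_sqr ler_wsqrtr //.
have := sqr_ge0 a; lra.
Qed.

Definition hC (p : R * R) : C := (p.1 +i* p.2)%C.

Lemma hC_cont : continuous hC.
Proof.
case=> a b B /nbhsC [r r0 H].
exists ([set x | `|a - x| < r / 2], [set y | `|b - y| < r / 2]).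
  by split; apply: nbhsR; exists (r / 2) => //; rewrite divr_gt0.
case=> x y [/= hx hy]; apply: H.
apply: le_lt_trans (modulus_ReIm _) _ => /=.
move: hx hy; lra.
Qed.

Lemma closure_bounded (Om : set C) M : (forall z, Om z -> modulus z <= M) ->
  forall z, closure Om z -> modulus z <= M.
Proof.
move=> H z cz; rewrite leNgt; apply/negP => Mz.
have : nbhs z [set w | modulus (z - w) < modulus z - M].
  by apply/nbhsC; exists (modulus z - M) => //; rewrite subr_gt0.
move/cz => [w [Omw hw]]; have := H w Omw.
have := modulusD w (z - w).
have -> : w + (z - w) = z by rewrite addrCA subrr addr0.
move: hw => /=.
lra.
Qed.


Lemma compact_closure_bounded (Om : set C) : bounded_C Om -> compact (closure Om).
Proof.
case=> M HM.
apply: (@subclosed_compact _ _ (hC @` (`[-M, M] `*` `[-M, M]))).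
- exact: closed_closure.
- apply: continuous_compact; first exact: continuous_subspaceT hC_cont.
  by apply: compact_setX; exact: segment_compact.
- move=> z cz; have Mz := @closure_bounded Om M HM z cz.
  exists (complex.Re z, complex.Im z); last by case: z {cz Mz}.
  split; rewrite /= in_itv /= -ler_norml.
  + exact: le_trans (Re_le z) Mz.
  + exact: le_trans (Im_le z) Mz.
Qed.

Lemma contR_near (u : R -> R) x (e : R) : continuous u -> 0 < e ->
  \forall y \near x, `|u x - u y| < e.
Proof. by move=> cu e0; apply: (cu x [set v | `|u x - v| < e]); apply: nbhsR; exists e. Qed.

Lemma periodic_int (u : R -> R) (T : R) : (forall y, u (y + T) = u y) ->
  forall (m : int) x, u (x + m%:~R * T) = u x.
Proof.
move=> hu.
have hn : forall (n : nat) x, u (x + n%:R * T) = u x.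
  elim=> [|n IH] x; first by rewrite mul0r addr0.
  by rewrite -[n.+1]addn1 natrD mulrDl mul1r addrA hu IH.
case=> n x; first by rewrite -(hn n x).
rewrite NegzE mulNr.
by rewrite -[in RHS](subrK ((n.+1)%:R * T) x) hn.
Qed.

Lemma Dk_robust (k : nat) (u : R -> R) : (0 < k)%N -> Dk k u ->
  exists2 d : R, 0 < d & forall th, exists y,
    th < y < th + k%:R^-1 /\ k%:R * `|y - th| + d < `|u y - u th|.
Proof.
move=> k0 [cu per hD].
set kr : R := k%:R.
have kr0 : 0 < kr by rewrite /kr ltr0n.
set T : R := 2 * pi.
have T0 : 0 < T by rewrite /T mulr_gt0 // pi_gt0.
pose P := fun (d : R) th => exists y, th < y < th + kr^-1 /\
   kr * `|y - th| + d < `|u y - u th|.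
have cov : \forall d \near 0^'+, `[0, T] `<=` P d.
  have nc := (near_covering_withinP `[0, T]).2
     ((compact_near_coveringP `[0, T]).1 (@segment_compact R 0 T)).
  apply: (nc R (0^'+) P _) => th _.
  case: (hD th) => y [/andP[ty yt] hy].
  set m := `|u y - u th| - kr * `|y - th|.
  have m0 : 0 < m by rewrite subr_gt0.
  have m40 : 0 < m / 4 by rewrite divr_gt0.
  exists ([set th' | th' < y /\ y < th' + kr^-1 /\ `|u th - u th'| < m / 4 /\
            kr * `|th - th'| < m / 4], [set d | d < m / 4]).
    split => /=; last exact: nbhs_right_lt.
    have h1 : \forall th' \near th, th' < y.
      apply: nbhsR; exists (y - th); first by rewrite subr_gt0.
      by move=> z; rewrite ltr_norml => /andP[h h']; lra.
    have h2 : \forall th' \near th, y < th' + kr^-1.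
      apply: nbhsR; exists (th + kr^-1 - y); first by rewrite subr_gt0.
      by move=> z; rewrite ltr_norml => /andP[h h']; lra.
    have h3 := contR_near u th (m / 4) cu m40.
    have h4 : \forall th' \near th, kr * `|th - th'| < m / 4.
      apply: nbhsR; exists (m / 4 / kr); first by rewrite divr_gt0.
      by move=> z; rewrite ltr_pdivlMr // mulrC.
    apply: filterS (filterI h1 (filterI h2 (filterI h3 h4))).
    by move=> z [a [b [c e]]].
  case=> th' d /= [[a [b [c e]]] dd] _; exists y; split; first by apply/andP.
  have t1 := ler_distD (u th') (u y) (u th).
  have t2 := ler_distD th y th'.
  have t3 : kr * `|y - th'| <= kr * `|y - th| + kr * `|th - th'|.
    by rewrite -mulrDr ler_wpM2l // ltW.
  rewrite (distrC (u th') (u th)) in t1.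
  have hm : `|u y - u th| = kr * `|y - th| + m by rewrite /m; lra.
  move: t1 t3 hm c dd. lra.
have [d [d0 hd]] : exists d, 0 < d /\ `[0, T] `<=` P d.
  exact: filter_ex (filterI (nbhs_right_gt 0) cov).
exists d => // th.
set mm := Num.floor (th / T).
have hl : mm%:~R * T <= th by rewrite -ler_pdivlMr // floor_le.
have hr : th < mm%:~R * T + T.
  have : th / T < (mm + 1)%:~R by rewrite -floor_lt_int ltrDl.
  by rewrite ltr_pdivrMr // intrD mulrDl mul1r.
have [y0 [/andP[y1 y2] hy0]] : P d (th - mm%:~R * T).
  by apply: hd; rewrite /= in_itv /=; apply/andP; split; lra.
exists (y0 + mm%:~R * T).
have e1 : y0 + mm%:~R * T - th = y0 - (th - mm%:~R * T) by lra.
have e2 : u th = u (th - mm%:~R * T).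
  by rewrite -(@periodic_int u T per mm (th - mm%:~R * T)) subrK.
rewrite e1 e2 (@periodic_int u T per).
split; last by [].
by apply/andP; split; lra.
Qed.

Lemma Dk_stable (k : nat) (u v : R -> R) (d s : R) :
  (forall th, exists y,
    th < y < th + k%:R^-1 /\ k%:R * `|y - th| + d < `|u y - u th|) ->
  continuous v -> (forall y, v (y + 2 * pi) = v y) ->
  (forall x, `|u x - v x| <= s) -> 2 * s < d -> Dk k v.
Proof.
move=> hu cv pv huv sd; split => // th.
have [y [yy hy]] := hu th; exists y; split => //.
have t1 := ler_distD (v y) (u y) (u th).
have t2 := ler_distD (v th) (v y) (u th).
have a1 := huv y; have a2 := huv th.
rewrite (distrC (v th) (u th)) in t2.
move: t1 t2 a1 a2 hy sd; lra.
Qed.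

Lemma expi_mod (y : R) : modulus (expi y) = 1.
Proof.
by rewrite /modulus /expi /ComplexField.Normc.normc cos2Dsin2 sqrtr1.
Qed.

Lemma expi_per (y : R) : expi (y + 2 * pi) = expi y.
Proof.
have -> : y + 2 * pi = y + pi / 2 + pi / 2 + pi / 2 + pi / 2.
  by lra.
by rewrite /expi !(cosDpihalf, sinDpihalf) !opprK.
Qed.

Lemma expi_cont : continuous (@expi R).
Proof.
move=> y B /nbhsC [r r0 H].
have r2 : 0 < r / 2 by rewrite divr_gt0.
have h1 := contR_near cos y (r / 2) (@continuous_cos R) r2.
have h2 := contR_near sin y (r / 2) (@continuous_sin R) r2.
apply: filterS (filterI h1 h2) => z [a b]; apply: H.
apply: le_lt_trans (modulus_ReIm _) _.
rewrite /expi /=.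
move: a b; lra.
Qed.

Lemma phi_boundary (Omega : set C) (V : nat -> set (Chat R))
  (phi : C -> Chat R) (n i : nat) :
  domain Omega -> bounded_C Omega ->
  (forall i, (i < n)%N -> exists2 x, (~` (@toChat R @` Omega)) x &
      V i = connected_component (~` (@toChat R @` Omega)) x) ->
  (forall i j, (i < n)%N -> (j < n)%N -> V i = V j -> i = j) ->
  (forall x, (~` (@toChat R @` Omega)) x -> exists2 i, (i < n)%N & V i x) ->
  riemann_mapping phi (~` V i) -> (i < n)%N ->
  forall w, modulus w = 1 -> exists z, phi w = Some z /\ closure Omega z.
Proof.
move=> [oO [_ _]] hb hV hinj hcov hR iN w w1.
set A := ~` (@toChat R @` Omega).
have Aclosed : closed A.
  apply: open_closedC; exact: one_point_compactification_open_some.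
have Vclosed j : (j < n)%N -> closed (V j).
  by move=> jn; case: (hV j jn) => x _ ->; exact: component_closed.
have Vdisj j : (j < n)%N -> j <> i -> forall p, V i p -> ~ V j p.
  move=> jn ji p Vip Vjp; apply: ji; apply: hinj => //.
  case: (hV i iN) => x1 _ e1; case: (hV j jn) => x2 _ e2.
  rewrite e1 in Vip; rewrite e2 in Vjp.
  by rewrite e1 e2 (same_connected_component Vip) (same_connected_component Vjp).
case: hR => [[phic phiinj phiimg _] [phiopen _]].
have wcd : (@closed_disc R) w by rewrite /closed_disc /= w1.
have p_cl : closure (~` V i) (phi w) by rewrite -phiimg; exists w.
have p_V : V i (phi w).
  case: (pselect (V i (phi w))) => // nV; exfalso.
  have : (phi @` (@open_disc R)) (phi w) by rewrite phiopen.
  case=> w' w'o e.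
  have ew := phiinj w' w (ltW w'o) wcd e.
  by move: w'o; rewrite /open_disc /= ew w1 ltxx.
set p := phi w.
have hN : forall m, (m <= n)%N -> \forall x \near p, forall j, (j < m)%N -> j <> i -> ~ V j x.
  elim=> [|m IH] mn.
    by apply: filterE => x j; rewrite ltn0.
  have h1 := IH (ltnW mn).
  have h2 : \forall x \near p, m <> i -> ~ V m x.
    case: (pselect (m = i)) => [->|mi]; first by apply: filterE.
    apply: filterS (open_nbhs_nbhs (_ : open_nbhs p (~` V m))).
      by move=> x h _.
    by split; [exact: closed_openC (Vclosed m mn) | exact: Vdisj m mn mi p p_V].
  apply: filterS (filterI h1 h2) => x [hx1 hx2] j.
  rewrite ltnS leq_eqVlt => /orP [/eqP -> |]; first exact: hx2.
  exact: hx1.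
have p_cl2 : closure (@toChat R @` Omega) p.
  move=> N Np.
  have := p_cl _ (filterI Np (hN n (leqnn n))).
  case=> x [nVx [Nx hx]]; exists x; split => //.
  apply: contrapT => nO.
  have [j jn Vjx] := hcov x nO.
  have ji : j <> i by move=> e; apply: nVx; rewrite -e.
  exact: hx j jn ji Vjx.
have K := @compact_closure_bounded Omega hb.
move: p_cl2; rewrite /p; case: (phi w) => [z|] hcl.
  exists z; split => //.
  move=> B Bz.
  have := hcl (Some @` B) (@one_point_compactification_some_nbhs _ z B Bz).
  case=> q [[z' Oz' <-] [b Bb eb]].
  case: eb => ebz; exists z'; split => //; by rewrite -ebz.
exfalso.
have : nbhs (None : Chat R) (Some @` (~` closure Omega) `|` [set None]).
  by exists (closure Omega) => //; split => //; exact: closed_closure.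
move/hcl => [q [[z' Oz' <-] [[b nb eb]|//]]].
case: eb => ebz; apply: nb; rewrite ebz; exact: subset_closure.
Qed.

Lemma within_eps (A : set C) (f : C -> C) z (e : R) :
  {within A, continuous f} -> A z -> 0 < e ->
  \forall w \near z, A w -> modulus (f z - f w) < e.
Proof.
move=> fc Az e0; apply: (@within_near _ _ A f z [set v | modulus (f z - v) < e] fc Az).
by apply/nbhsC; exists e.
Qed.

Lemma sup_bound (K : set C) (f g : C -> C) : compact K ->
  {within K, continuous f} -> {within K, continuous g} ->
  exists M, forall z, K z -> modulus (f z - g z) <= M.
Proof.
move=> cK fc gc.
have nc := (near_covering_withinP K).2 ((compact_near_coveringP K).1 cK).
have cov : \forall M \near +oo, K `<=` (fun z => modulus (f z - g z) <= M).
  apply: (nc R (+oo) (fun M z => modulus (f z - g z) <= M)) => z Kz.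
  have h1 := @within_eps K f z 1 fc Kz (@ltr01 R).
  have h2 := @within_eps K g z 1 gc Kz (@ltr01 R).
  exists ([set w | K w -> modulus (f z - f w) < 1 /\ modulus (g z - g w) < 1],
          [set M | modulus (f z - g z) + 2 < M]).
    split; last exact: nbhs_pinfty_gt (num_real _).
    by apply: filterS (filterI h1 h2) => w [a b] Kw; split; [apply: a|apply: b].
  case=> w M /= [hw hM] Kw; have [a b] := hw Kw.
  have e : f w - g w = (f w - f z) + ((f z - g z) + (g z - g w)).
    by rewrite !addrA subrK addrNK.
  rewrite e; rewrite modulusB in a.
  have t1 := modulusD (f w - f z) ((f z - g z) + (g z - g w)).
  have t2 := modulusD (f z - g z) (g z - g w).
  move: t1 t2 a b hM; lra.
by have [M _ HM] := pinfty_ex_gt0 cov; exists M.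
Qed.

Lemma ReB (a b : C) : complex.Re (a - b) = complex.Re a - complex.Re b.
Proof. by case: a; case: b. Qed.

Lemma pb_cont (Omega : set C) (phi : C -> Chat R) :
  {within (@closed_disc R), continuous phi} ->
  (forall y, exists z, phi (expi y) = Some z /\ closure Omega z) ->
  forall y B, nbhs (odflt 0 (phi (expi y))) B ->
  \forall y' \near y, B (odflt 0 (phi (expi y'))).
Proof.
move=> phic hbd y B hB.
have pbE x : phi (expi x) = Some (odflt 0 (phi (expi x))).
  by have [z [-> _]] := hbd x.
have hS : nbhs (phi (expi y)) (Some @` B).
  by rewrite pbE; exact: (@one_point_compactification_some_nbhs _ _ B hB).
have wcd x : (@closed_disc R) (expi x) by change (modulus (expi x) <= 1); rewrite expi_mod.
have h := @within_near _ _ (@closed_disc R) phi (expi y) _ phic (wcd y) hS.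
have h2 : \forall y' \near y, (@closed_disc R) (expi y') -> (Some @` B) (phi (expi y')) := expi_cont y _ h.
apply: filterS h2 => y' /= H.
have := H (wcd y'); rewrite pbE.
by case=> b Bb [<-].
Qed.

Lemma u_cont (Omega : set C) (phi : C -> Chat R) (f : C -> C) :
  {within (@closed_disc R), continuous phi} ->
  (forall y, exists z, phi (expi y) = Some z /\ closure Omega z) ->
  {within closure Omega, continuous f} ->
  continuous (fun y => complex.Re (f (odflt 0 (phi (expi y))))).
Proof.
move=> phic hbd fc y B /nbhs_ballP [e /= e0 He].
have cz : closure Omega (odflt 0 (phi (expi y))).
  by have [z [-> ?]] := hbd y.
have h := @within_eps _ f _ e fc cz e0.
have h2 := @pb_cont Omega phi phic hbd y _ h.
apply: filterS h2 => y' /= H; apply: He; rewrite -ball_normE /=.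
have cz' : closure Omega (odflt 0 (phi (expi y'))).
  by have [z [-> ?]] := hbd y'.
have := H cz'; rewrite -ReB; apply: le_lt_trans; exact: Re_le.
Qed.
End S.

Theorem lemma4p1 (R : realType) (n : nat) (Omega : set (CC R))
  (V : nat -> set (Chat R)) (phi : nat -> CC R -> Chat R) :
  domain Omega ->
  bounded_C Omega ->
  (exists J : nat -> set (CC R),
      [/\ forall i, (i < n)%N -> jordan_curve (J i),
          forall i j, (i < n)%N -> (j < n)%N -> i <> j -> J i `&` J j = set0 &
          boundary Omega = [set z | exists2 i, (i < n)%N & J i z]]) ->
  (* V_0, ..., V_{n-1} are the connected components of \hat C \ Omega *)
  (forall i, (i < n)%N -> exists2 x, (~` (@toChat R @` Omega)) x &
      V i = connected_component (~` (@toChat R @` Omega)) x) ->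
  (forall i j, (i < n)%N -> (j < n)%N -> V i = V j -> i = j) ->
  (forall x, (~` (@toChat R @` Omega)) x -> exists2 i, (i < n)%N & V i x) ->
  V 0%N (None : Chat R) ->
  (* phi_i : \bar D -> \bar Omega_i Riemann mappings, Omega_i = \hat C \ V_i *)
  (forall i, (i < n)%N -> riemann_mapping (phi i) (~` V i)) ->
  forall k i : nat, (0 < k)%N -> (i < n)%N ->
  open_in_A Omega (Ek Omega phi k i).

Proof.
move=> hdom hb _ hV hinj hcov _ hR k i k0 iN f [fA hDf].
have hbd : forall y, exists z, phi i (expi y) = Some z /\ closure Omega z.
  move=> y; exact: (@phi_boundary R Omega V (phi i) n i hdom hb hV hinj hcov
                     (hR i iN) iN (expi y) (expi_mod R y)).
have phic : {within (@closed_disc R), continuous (phi i)}.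
  by case: (hR i iN) => [[c _ _ _] _].
have [d d0 hd] := @Dk_robust R k _ k0 hDf.
exists (d / 2); first by rewrite divr_gt0.
move=> g gA hsup; split => //.
have [M HM] := @sup_bound R (closure Omega) f g
   (@compact_closure_bounded R Omega hb) fA.1 gA.1.
have ubS : has_ubound [set modulus (f z - g z) | z in closure Omega].
  by exists M => _ [z cz <-]; exact: HM.
apply: (@Dk_stable R k _ _ d (supdist Omega f g) hd
          (@u_cont R Omega (phi i) g phic hbd gA.1)).
- by move=> y /=; rewrite expi_per.
- move=> x /=; rewrite -ReB; apply: le_trans (Re_le _ _) _.
  apply: (ub_le_sup ubS); exists (odflt 0 (phi i (expi x))) => //.
  by have [z [-> ?]] := hbd x.
- move: hsup; rewrite /supdist; lra.
Qed.
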